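(* Let $\omega\colon\mathbf Z_+\to(0,+\infty)$ be a weight which is bounded from below and such that $\mathcal T$ is a bounded operator on $\mathcal X_\omega$. Then the adjoint $\mathcal T^*$ of $\mathcal T$ on $\mathcal X_\omega$ has no eigenvalues: $\sigma_p(\mathcal T^* )=\emptyset$. In particular this holds for $\omega=\omega_0$, $\omega_0(n)=(n+1)/\pi$.
   Context: $T\colon\mathbf Z_+\to\mathbf Z_+$ is the modified Collatz map: $T(n)=n/2$ for $n$ even, $T(n)=(3n+1)/2$ for $n$ odd. $\mathcal X_\omega$ is the Hilbert space of holomorphic functions $f(z)=\sum_{n\ge3}c_nz^n$ on the unit disk with $\|f\|_\omega^2=\sum_{n\ge3}|c_n|^2/\omega(n)<\infty$ and inner product $\langle f,g\rangle=\sum_{n\ge3}c_n(f)\overline{c_n(g)}/\omega(n)$. $\mathcal T\sum_{n\ge3}c_nz^n=\sum_{j\ge3,\,T(j)\ge3}c_jz^{T(j)}$. $\mathcal T$ is bounded on $\mathcal X_\omega$ iff the sequences $\omega(6m)/\omega(3m)$, $\omega(6m+2)/\omega(3m+1)$, $(\omega(6m+4)+\omega(2m+1))/\omega(3m+2)$ ($m\ge1$) are bounded; this holds for $\omega_0$. $\sigma_p$ denotes the point spectrum (set of eigenvalues). *)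

(* Defs.v *)
From Stdlib Require Import Reals Arith List.
From Coquelicot Require Import Coquelicot.
Import ListNotations.
Open Scope R_scope.

Definition collatzT (n : nat) : nat :=
  if Nat.even n then Nat.div n 2 else Nat.div (3 * n + 1) 2.

(* Coefficient sequences c : nat -> C represent f(z) = sum_{n>=3} c_n z^n.
   Membership in X_omega: c_n = 0 for n < 3, f holomorphic on the unit disk
   (the power series converges absolutely on |z| = r for every r < 1),
   and sum |c_n|^2 / omega(n) < oo. *)
Definition inX (omega : nat -> R) (c : nat -> C) : Prop :=
  (forall n : nat, (n < 3)%nat -> c n = 0%C) /\
  (forall r : R, 0 <= r < 1 -> ex_series (fun n => Cmod (c n) * r ^ n)) /\
  ex_series (fun n => (Cmod (c n)) ^ 2 / omega n).

Definition normsqX (omega : nat -> R) (c : nat -> C) : R :=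
  Series (fun n => (Cmod (c n)) ^ 2 / omega n).
Definition normX (omega : nat -> R) (c : nat -> C) : R := sqrt (normsqX omega c).

Definition ipX (omega : nat -> R) (c d : nat -> C) : C :=
  let t := fun n => (c n * Cconj (d n) / RtoC (omega n))%C in
  (Series (fun n => fst (t n)), Series (fun n => snd (t n))).

(* The operator T: (T c)_k = sum over j >= 3 with T(j) = k of c_j, for k >= 3.
   Since T(j) >= j/2, such j satisfy j <= 2k, so the range 3..2k suffices. *)
Definition Top (c : nat -> C) (k : nat) : C :=
  if Nat.ltb k 3 then 0%C
  else fold_right Cplus 0%C
         (map c (filter (fun j => Nat.eqb (collatzT j) k) (seq 3 (2 * k - 2)))).

Definition Tbounded (omega : nat -> R) : Prop :=
  (forall c, inX omega c -> inX omega (Top c)) /\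
  exists M : R, forall c, inX omega c -> normX omega (Top c) <= M * normX omega c.

(* lambda is an eigenvalue of the adjoint T^*: there is g in X_omega, g <> 0,
   with T^* g = lambda g, i.e. <T f, g> = <f, lambda g> for all f in X_omega. *)
Definition adj_eigenvalue (omega : nat -> R) (lambda : C) : Prop :=
  exists g : nat -> C, inX omega g /\ (exists n, g n <> 0%C) /\
    forall f, inX omega f -> ipX omega (Top f) g = (Cconj lambda * ipX omega f g)%C.

Definition omega0 (n : nat) : R := (INR n + 1) / PI.

(* Main.v *)
From Stdlib Require Import Reals Arith Lia Lra Psatz List.
From Coquelicot Require Import Coquelicot.
Require Import Defs.
Open Scope R_scope.

Lemma sum_n_single (u : nat -> R) (j : nat) :
  (forall n, n <> j -> u n = 0) ->
  forall n, sum_n u n = if Nat.leb j n then u j else 0.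
Proof.
  intros Hu n; induction n.
  - rewrite sum_O. destruct j; simpl; auto.
  - rewrite sum_Sn, IHn. unfold plus; simpl.
    destruct (Nat.leb j n) eqn:E1; destruct (Nat.leb j (S n)) eqn:E2;
      apply Nat.leb_le in E1 || apply Nat.leb_gt in E1;
      apply Nat.leb_le in E2 || apply Nat.leb_gt in E2; try lia.
    + rewrite (Hu (S n)) by lia; ring.
    + assert (j = S n) by lia; subst; ring.
    + rewrite (Hu (S n)) by lia; ring.
Qed.

Lemma is_series_single (u : nat -> R) (j : nat) :
  (forall n, n <> j -> u n = 0) -> is_series u (u j).
Proof.
  intros Hu. assert (H : is_lim_seq (sum_n u) (u j)); [|exact H].
  apply (is_lim_seq_ext_loc (fun _ => u j)).
  - exists j. intros n Hn. rewrite (sum_n_single u j Hu).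
    apply Nat.leb_le in Hn. now rewrite Hn.
  - apply is_lim_seq_const.
Qed.

Lemma Series_single (u : nat -> R) (j : nat) :
  (forall n, n <> j -> u n = 0) -> Series u = u j.
Proof. intros; apply is_series_unique, is_series_single; auto. Qed.

Lemma ex_series_single (u : nat -> R) (j : nat) :
  (forall n, n <> j -> u n = 0) -> ex_series u.
Proof. intros; eexists; apply is_series_single; eauto. Qed.

Lemma collatz_bound j : (j <= 2 * collatzT j)%nat.
Proof.
  unfold collatzT; destruct (Nat.even j) eqn:E.
  - apply Nat.even_spec in E. destruct E as [m ->].
    pose proof (Nat.div_mod (2*m) 2). pose proof (Nat.mod_upper_bound (2*m) 2). lia.
  - pose proof (Nat.div_mod (3*j+1) 2). pose proof (Nat.mod_upper_bound (3*j+1) 2). lia.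
Qed.

Lemma collatz_double n : collatzT (2 * n) = n.
Proof.
  unfold collatzT. assert (E : Nat.even (2*n) = true)
    by (apply Nat.even_spec; exists n; lia).
  rewrite E.
  pose proof (Nat.div_mod (2*n) 2). pose proof (Nat.mod_upper_bound (2*n) 2). lia.
Qed.

Definition ev (j : nat) : nat -> C := fun n => if Nat.eqb n j then 1%C else 0%C.

Lemma fold_ev_notin j l : ~ In j l -> fold_right Cplus 0%C (map (ev j) l) = 0%C.
Proof.
  induction l; simpl; auto. intros H.
  rewrite IHl by tauto. unfold ev. destruct (Nat.eqb_spec a j); [tauto|].
  apply Cplus_0_l.
Qed.

Lemma fold_ev_in j l : NoDup l -> In j l -> fold_right Cplus 0%C (map (ev j) l) = 1%C.
Proof.
  induction l; simpl; [tauto|]. intros Hnd Hin. inversion Hnd; subst.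
  destruct Hin as [<-|Hin].
  - rewrite fold_ev_notin by auto. unfold ev. rewrite Nat.eqb_refl. apply Cplus_0_r.
  - rewrite IHl by auto. unfold ev. destruct (Nat.eqb_spec a j); [subst; tauto|].
    apply Cplus_0_l.
Qed.

Lemma Top_ev_off j k : k <> collatzT j -> Top (ev j) k = 0%C.
Proof.
  intros Hk. unfold Top. destruct (Nat.ltb k 3); auto.
  apply fold_ev_notin. rewrite filter_In. intros [_ H].
  apply Nat.eqb_eq in H. auto.
Qed.

Lemma Top_ev_on j : (3 <= j)%nat -> (3 <= collatzT j)%nat -> Top (ev j) (collatzT j) = 1%C.
Proof.
  intros Hj Hk. unfold Top. replace (Nat.ltb (collatzT j) 3) with false
    by (symmetry; apply Nat.ltb_ge; lia).
  apply fold_ev_in.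
  - apply NoDup_filter, seq_NoDup.
  - apply filter_In. split.
    + apply in_seq. pose proof (collatz_bound j). lia.
    + apply Nat.eqb_refl.
Qed.

Lemma ev_inX omega j : (3 <= j)%nat -> inX omega (ev j).
Proof.
  intros Hj. split; [|split].
  - intros n Hn. unfold ev. destruct (Nat.eqb_spec n j); [lia|auto].
  - intros r _. apply (ex_series_single _ j). intros n Hn. unfold ev.
    destruct (Nat.eqb_spec n j); [lia|]. rewrite Cmod_0; ring.
  - apply (ex_series_single _ j). intros n Hn. unfold ev.
    destruct (Nat.eqb_spec n j); [lia|]. rewrite Cmod_0. unfold Rdiv; ring.
Qed.

Lemma ipX_single (omega : nat -> R) (c g : nat -> C) (m : nat) : (forall n, n <> m -> c n = 0%C) ->
  ipX omega c g = (c m * Cconj (g m) / RtoC (omega m))%C.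
Proof.
  intros Hc. unfold ipX.
  rewrite (Series_single _ m), (Series_single (fun n => snd _) m).
  - destruct (c m * Cconj (g m) / RtoC (omega m))%C; reflexivity.
  - intros n Hn. rewrite Hc by auto. unfold Cdiv. rewrite !Cmult_0_l. reflexivity.
  - intros n Hn. rewrite Hc by auto. unfold Cdiv. rewrite !Cmult_0_l. reflexivity.
Qed.

Lemma Cmod_term x y w : 0 < w -> Cmod (x * Cconj y / RtoC w)%C = Cmod x * Cmod y / w.
Proof.
  intros Hw. rewrite Cmod_div, Cmod_mult, Cmod_conj, Cmod_R, Rabs_pos_eq; try lra.
  intro H. injection H. lra.
Qed.

Lemma main_lemma (omega : nat -> R) :
  (forall n : nat, (1 <= n)%nat -> 0 < omega n) ->
  (exists delta : R, 0 < delta /\ forall n : nat, (1 <= n)%nat -> delta <= omega n) ->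
  forall lambda : C, ~ adj_eigenvalue omega lambda.
Proof.
  intros Hpos [delta [Hd Hlow]] lambda [g [[Hg0 [_ Hgs]] [[n0 Hn0] Heq]]].
  set (a := fun n => Cmod (g n) / omega n).
  set (L := Cmod lambda).
  assert (HL : 0 <= L) by apply Cmod_ge_0.
  assert (Ha0 : forall n, 0 <= a n).
  { intros n. unfold a. destruct n.
    - rewrite Hg0 by lia. rewrite Cmod_0. unfold Rdiv; lra.
    - apply Rcomplements.Rdiv_le_0_compat; [apply Cmod_ge_0| apply Hpos; lia]. }
  assert (R1 : forall j, (3 <= j)%nat ->
    ((3 <= collatzT j)%nat -> a (collatzT j) = L * a j) /\
    ((collatzT j < 3)%nat -> L * a j = 0)).
  { intros j Hj.
    pose proof (Heq (ev j) (ev_inX omega j Hj)) as E.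
    rewrite (ipX_single omega (Top (ev j)) g (collatzT j)) in E
      by (intros; apply Top_ev_off; auto).
    rewrite (ipX_single omega (ev j) g j) in E
      by (intros n Hn; unfold ev; destruct (Nat.eqb_spec n j); [lia|auto]).
    apply (f_equal Cmod) in E.
    rewrite Cmod_mult, Cmod_conj, (Cmod_term _ _ _ (Hpos j ltac:(lia))) in E.
    unfold ev at 2 in E. rewrite Nat.eqb_refl, Cmod_1 in E.
    split.
    - intros HT. rewrite Top_ev_on in E by auto.
      rewrite (Cmod_term _ _ _ (Hpos (collatzT j) ltac:(lia))), Cmod_1 in E.
      unfold a, L. rewrite Rmult_1_l in E. rewrite E. unfold Rdiv. ring.
    - intros HT. assert (Z : Top (ev j) (collatzT j) = 0%C).
      { unfold Top. replace (Nat.ltb (collatzT j) 3) with true; auto.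
        symmetry; apply Nat.ltb_lt; auto. }
      rewrite Z in E. unfold Cdiv in E. rewrite !Cmult_0_l, Cmod_0 in E.
      unfold a, L. unfold Rdiv in *. lra. }
  assert (R2 : forall n, (3 <= n)%nat -> a n = L * a (2 * n)%nat).
  { intros n Hn. destruct (R1 (2*n)%nat ltac:(lia)) as [H _].
    rewrite collatz_double in H. auto. }
  assert (Tail : forall eps, 0 < eps -> exists N, forall n, (N <= n)%nat -> a n < eps).
  { intros eps He. pose proof (ex_series_lim_0 _ Hgs) as Hl.
    apply is_lim_seq_spec in Hl.
    assert (Hp : 0 < eps^2 * delta) by (apply Rmult_lt_0_compat; nra).
    destruct (Hl (mkposreal _ Hp)) as [N HN].
    exists (S N). intros n Hn. specialize (HN n ltac:(lia)). simpl in HN.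
    rewrite Rminus_0_r in HN.
    pose proof (Hpos n ltac:(lia)) as Hw. pose proof (Hlow n ltac:(lia)) as Hlw.
    pose proof (Cmod_ge_0 (g n)) as Hc.
    set (c := Cmod (g n)) in *. set (w := omega n) in *.
    assert (H1 : c^2 < eps^2 * delta * w).
    { apply Rabs_lt_between in HN. destruct HN as [_ HN].
      apply (Rmult_lt_compat_r w) in HN; auto.
      unfold Rdiv in HN. rewrite Rmult_assoc, Rinv_l in HN by lra. lra. }
    unfold a. fold c w. apply (Rmult_lt_reg_r w); auto.
    unfold Rdiv. rewrite Rmult_assoc, Rinv_l by lra. rewrite Rmult_1_r.
    destruct (Rlt_or_le c (eps * w)) as [H|H]; auto.
    exfalso. assert (0 <= eps * w) by (apply Rmult_le_pos; lra).
    assert ((eps * w) * (eps * w) <= c * c) by (apply Rmult_le_compat; lra).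
    assert (eps^2 * delta * w <= eps^2 * w * w).
    { rewrite (Rmult_assoc (eps^2) w w), (Rmult_assoc (eps^2) delta w).
      apply Rmult_le_compat_l; [apply pow2_ge_0|]. apply Rmult_le_compat_r; lra. }
    assert (c^2 = c*c) by ring. assert (eps^2 * w * w = (eps*w)*(eps*w)) by ring.
    lra. }
  assert (Hall : forall n, (3 <= n)%nat -> a n = 0).
  { destruct (Rle_or_lt L 1) as [HL1|HL1].
    - assert (Mon : forall k n, (3 <= n)%nat -> a n <= a (2^k * n)%nat).
      { induction k; intros n Hn.
        - simpl. rewrite Nat.add_0_r. lra.
        - rewrite R2 by auto. replace (2 ^ S k * n)%nat with (2^k * (2*n))%nat
            by (simpl; lia).
          pose proof (IHk (2*n)%nat ltac:(lia)). pose proof (Ha0 (2*n)%nat). nra. }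
      intros n Hn. destruct (Ha0 n) as [Hp|]; auto. exfalso.
      destruct (Tail (a n) Hp) as [N HN].
      pose proof (Nat.pow_gt_lin_r 2 N ltac:(lia)).
      specialize (HN (2^N * n)%nat ltac:(nia)). specialize (Mon N n Hn). lra.
    - assert (Bd : forall N, exists B, 0 <= B /\ forall n, (n < N)%nat -> a n <= B).
      { induction N.
        - exists 0. split; [lra|]. intros; lia.
        - destruct IHN as [B [HB HB']]. exists (Rmax B (a N)). split.
          + apply Rle_trans with B; auto; apply Rmax_l.
          + intros n Hn. destruct (Nat.eq_dec n N) as [->|].
            * apply Rmax_r.
            * apply Rle_trans with B; [apply HB'; lia|apply Rmax_l]. }
      destruct (Tail 1 ltac:(lra)) as [N HN]. destruct (Bd N) as [B [HB HB']].
      set (B' := Rmax B 1).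
      assert (HB'' : forall n, a n <= B').
      { intros n. destruct (Nat.lt_ge_cases n N).
        - apply Rle_trans with B; [auto|apply Rmax_l].
        - apply Rle_trans with 1; [left; auto|apply Rmax_r]. }
      assert (Grow : forall k j, (3 <= j)%nat -> a j * L^k <= B').
      { induction k; intros j Hj.
        - simpl. rewrite Rmult_1_r. auto.
        - destruct (R1 j Hj) as [A1 A2].
          replace (a j * L ^ S k) with ((L * a j) * L^k) by (simpl; ring).
          destruct (Nat.lt_ge_cases (collatzT j) 3) as [Hc|Hc].
          + rewrite A2 by auto. rewrite Rmult_0_l. apply Rle_trans with 1; [lra|apply Rmax_r].
          + rewrite <- A1 by auto. apply IHk; auto. }
      intros n Hn. destruct (Ha0 n) as [Hp|]; auto. exfalso.
      assert (HLa : Rabs L > 1) by (rewrite Rabs_pos_eq; lra).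
      destruct (Pow_x_infinity L HLa (B' / a n + 1)) as [K HK].
      specialize (HK K ltac:(lia)). rewrite Rabs_pos_eq in HK by (apply pow_le; auto).
      specialize (Grow K n Hn).
      assert (a n * (B' / a n + 1) <= a n * L^K) by (apply Rmult_le_compat_l; lra).
      assert (a n * (B' / a n + 1) = B' + a n) by (field; lra). lra. }
  apply Hn0. destruct (Nat.lt_ge_cases n0 3) as [H|H]; [apply Hg0; auto|].
  apply Cmod_eq_0. specialize (Hall n0 H). unfold a in Hall.
  pose proof (Hpos n0 ltac:(lia)).
  unfold Rdiv in Hall. apply Rmult_integral in Hall. destruct Hall as [H2|H2]; auto.
  exfalso. apply Rinv_neq_0_compat in H2; lra.
Qed.

Theorem theorem2p7 :
  (forall omega : nat -> R,
     (forall n : nat, (1 <= n)%nat -> 0 < omega n) ->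
     (exists delta : R, 0 < delta /\ forall n : nat, (1 <= n)%nat -> delta <= omega n) ->
     Tbounded omega ->
     forall lambda : C, ~ adj_eigenvalue omega lambda)
  /\ (forall lambda : C, ~ adj_eigenvalue omega0 lambda).
Proof.
  split.
  - intros omega H1 H2 _. apply main_lemma; auto.
  - pose proof PI_RGT_0 as HPI.
    assert (HI : 0 < / PI) by (apply Rinv_0_lt_compat; auto).
    apply main_lemma.
    + intros n _. unfold omega0, Rdiv. apply Rmult_lt_0_compat; auto.
      pose proof (pos_INR n); lra.
    + exists (1 / PI). split.
      * unfold Rdiv. lra.
      * intros n _. unfold omega0, Rdiv. apply Rmult_le_compat_r; [lra|].
        pose proof (pos_INR n); lra.
Qed.
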